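(* Let $C_{drel}>0$ be a constant such that for all $\mathcal{T}\in\mathbb{T}$ and all refinements $\mathcal{T}_*\in\mathbb{T}$ of $\mathcal{T}$, $\|u_{\mathcal{T}_*}-u_{\mathcal{T}}\|^2_{H^1(\Omega)}\le C_{drel}\,\eta^2_{\mathcal{T}}(u_{\mathcal{T}},\mathcal{T}\setminus\mathcal{T}_* )$, and let $\delta>0$, $C_{est}>0$ be constants such that for all such $\mathcal{T},\mathcal{T}_*$, $\eta^2_{\mathcal{T}}(u_{\mathcal{T}},\mathcal{T}\cap\mathcal{T}_* )\le(1+\delta)\eta^2_{\mathcal{T}_*}(u_{\mathcal{T}_*},\mathcal{T}\cap\mathcal{T}_* )+C_{est}\|u_{\mathcal{T}_*}-u_{\mathcal{T}}\|^2_{H^1(\Omega)}$. Let $\theta\in\big(0,1/(1+C_{est}C_{drel})\big)$ and $\lambda:=\big(1-(1+C_{est}C_{drel})\theta\big)/(1+\delta)$. Let $\mathcal{T}\in\mathbb{T}$ and let $\mathcal{T}_*\in\mathbb{T}$ be any refinement of $\mathcal{T}$. If $\eta^2_{\mathcal{T}_*}(u_{\mathcal{T}_*})\le\lambda\,\eta^2_{\mathcal{T}}(u_{\mathcal{T}})$, then \[ \eta^2_{\mathcal{T}}(u_{\mathcal{T}},\mathcal{T}\setminus\mathcal{T}_* )\ge\theta\,\eta^2_{\mathcal{T}}(u_{\mathcal{T}}). \]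
   Context: Let $\Omega\subset\mathbb{R}^2$ be a bounded polygonal domain whose boundary $\Gamma$ is the union of three mutually disjoint parts $\Gamma_0,\Gamma_A,\Gamma_C$, each a line segment ($\Gamma_A,\Gamma_C$ of positive length). Let $\sigma\in L^\infty(\Omega)$ with $\sigma_1\le\sigma\le\sigma_2$ a.e. ($0<\sigma_1\le\sigma_2$), $g\in L^2(\Gamma_A)$, and $f$ either $f_1(t)=C_1t+C_2t^3$ or $f_2(t)=C_5(e^{C_3t}-e^{-C_4t})$ with positive constants $C_i$. $\mathcal{T}_0$ is a conforming shape-regular triangulation of $\bar\Omega$ with $\sigma|_K\in W^{1,\infty}(K)$ for $K\in\mathcal{T}_0$; $\mathbb{T}$ is the set of conforming triangulations obtained from $\mathcal{T}_0$ by finitely many newest vertex bisections; a refinement $\mathcal{T}_*$ of $\mathcal{T}$ is obtained from $\mathcal{T}$ by finitely many bisections; $\mathcal{T}\cap\mathcal{T}_*$ is the set of elements in both meshes and $\mathcal{T}\setminus\mathcal{T}_*$ the set of elements of $\mathcal{T}$ not in $\mathcal{T}_*$. Fix $m\ge1$; $V_{\mathcal{T}}=\{v\in H^1(\Omega):v|_K\in P_m(K)\,\forall K\in\mathcal{T}\}$, and $u_{\mathcal{T}}\in V_{\mathcal{T}}$ is the unique solution of $\int_\Omega\sigma\nabla u_{\mathcal{T}}\cdot\nabla v\,dx+\int_{\Gamma_C}f(u_{\mathcal{T}})v\,ds=\int_{\Gamma_A}gv\,ds$ for all $v\in V_{\mathcal{T}}$. Estimator: $h_K=|K|^{1/2}$;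 for an edge $F$, $n_F$ a fixed unit normal ($=n$, outward, on $\Gamma$). For $v\in V_{\mathcal{T}}$: $R_K(v)=\nabla\cdot(\sigma\nabla v)$ on $K$; $J_F(v)$ = jump of $\sigma\nabla v\cdot n_F$ across interior $F$, $\sigma\nabla v\cdot n$ on $\Gamma_0$, $g-\sigma\nabla v\cdot n$ on $\Gamma_A$, $f(v)+\sigma\nabla v\cdot n$ on $\Gamma_C$. $\eta_{\mathcal{T}}^2(v,K)=h_K^2\|R_K(v)\|^2_{L^2(K)}+\frac12\sum_{F\subset\partial K\text{ interior}}h_K\|J_F(v)\|^2_{L^2(F)}+\sum_{F\subset\partial K\cap\Gamma}h_K\|J_F(v)\|^2_{L^2(F)}$, $\eta^2_{\mathcal{T}}(v,\mathcal{M})=\sum_{K\in\mathcal{M}}\eta^2_{\mathcal{T}}(v,K)$, $\eta_{\mathcal{T}}(v)=\eta_{\mathcal{T}}(v,\mathcal{T})$. *)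

(* Defs.v *)
From HB Require Import structures.
From mathcomp Require Import all_boot all_order all_algebra.
From mathcomp Require Import finmap.
From mathcomp Require Import reals.
Set Implicit Arguments. Unset Strict Implicit. Unset Printing Implicit Defensive.
Import Order.TTheory GRing.Theory Num.Theory.
Local Open Scope ring_scope.


(* Abstract rendering of the AFEM setting:
   - elements of triangulations have type E; a mesh is a finite set of
     elements {fset E}; T `&` Ts and T `\` Ts are the sets of elements
     common to both meshes / of T not in Ts;
   - V is the (discrete) function space, u T : V the discrete solution u_T;
   - eta T v K is the local squared estimator eta_T^2(v,K);
   - nrm v is the H^1(Omega) norm of v. *)

Definition est (R : realType) (E : choiceType) (V : Type)
  (eta : {fset E} -> V -> E -> R) (T : {fset E}) (v : V) (M : {fset E}) : R :=
  \sum_(K <- M) eta T v K.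

(* Main.v *)
Require Import Defs.
From HB Require Import structures.
From mathcomp Require Import all_boot all_order all_algebra.
From mathcomp Require Import finmap.
From mathcomp Require Import reals.
From mathcomp Require Import ring lra.
Import Order.TTheory GRing.Theory Num.Theory.
Local Open Scope ring_scope.


Theorem lemma6p3 (R : realType) (E : choiceType) (V : zmodType)
  (Tadm : {fset E} -> Prop)                      (* the mesh family \mathbb{T} *)
  (refines : {fset E} -> {fset E} -> Prop)       (* refines Ts T : Ts is a refinement of T *)
  (u : {fset E} -> V)                            (* discrete solution u_T *)
  (eta : {fset E} -> V -> E -> R)                (* local squared estimator *)
  (nrm : V -> R)                                 (* H^1(Omega) norm *)
  (eta_ge0 : forall T v K, 0 <= eta T v K)
  (Cdrel delta Cest : R)
  (Cdrel_gt0 : 0 < Cdrel) (delta_gt0 : 0 < delta) (Cest_gt0 : 0 < Cest)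
  (Hdrel : forall T Ts, Tadm T -> Tadm Ts -> refines Ts T ->
     nrm (u Ts - u T) ^+ 2 <= Cdrel * est eta T (u T) (T `\` Ts)%fset)
  (Hest : forall T Ts, Tadm T -> Tadm Ts -> refines Ts T ->
     est eta T (u T) (T `&` Ts)%fset
       <= (1 + delta) * est eta Ts (u Ts) (T `&` Ts)%fset
          + Cest * nrm (u Ts - u T) ^+ 2)
  (theta : R) (theta_gt0 : 0 < theta)
  (theta_lt : theta < 1 / (1 + Cest * Cdrel))
  (T Ts : {fset E}) (HT : Tadm T) (HTs : Tadm Ts) (Href : refines Ts T)
  (Hred : est eta Ts (u Ts) Ts
          <= (1 - (1 + Cest * Cdrel) * theta) / (1 + delta) * est eta T (u T) T) :
  theta * est eta T (u T) T <= est eta T (u T) (T `\` Ts)%fset.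
Proof.
have split1 : est eta T (u T) T =
  est eta T (u T) (T `&` Ts)%fset + est eta T (u T) (T `\` Ts)%fset.
  rewrite /est (big_fsetID _ (mem Ts)); congr (_ + _); apply: eq_fbigl => i;
  by rewrite !inE /= // andbC.
have mono : est eta Ts (u Ts) (T `&` Ts)%fset <= est eta Ts (u Ts) Ts.
  rewrite /est [X in _ <= X](big_fsetID _ (mem T)).
  have -> : \sum_(i <- [fset x in Ts | mem T x]%fset) eta Ts (u Ts) i =
            \sum_(i <- (T `&` Ts)%fset) eta Ts (u Ts) i.
    by apply: eq_fbigl => i; rewrite !inE /= andbC.
  by rewrite lerDl; apply: sumr_ge0 => i _.
have H1 := Hdrel T Ts HT HTs Href.
have H2 := Hest T Ts HT HTs Href.
set A := est eta T (u T) T in split1 Hred *.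
set D := est eta T (u T) (T `\` Ts)%fset in split1 H1 *.
set I := est eta T (u T) (T `&` Ts)%fset in split1 H2.
set Is := est eta Ts (u Ts) (T `&` Ts)%fset in mono H2.
set Ss := est eta Ts (u Ts) Ts in mono Hred.
set N := nrm (u Ts - u T) ^+ 2 in H1 H2.
set c := Cest * Cdrel in theta_lt Hred *.
have c0 : 0 < c by rewrite mulr_gt0.
have d1 : 0 < 1 + delta by rewrite addr_gt0.
have Hred' : (1 + delta) * Ss <= (1 - (1 + c) * theta) * A.
  have -> : (1 - (1 + c) * theta) * A =
    (1 + delta) * ((1 - (1 + c) * theta) / (1 + delta) * A).
    by field; rewrite gt_eqF.
  by rewrite ler_wpM2l // ltW.
have HN : Cest * N <= c * D by rewrite /c -mulrA ler_wpM2l // ltW.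
have HIs : (1 + delta) * Is <= (1 + delta) * Ss by rewrite ler_wpM2l // ltW.
have E1 : (1 - (1 + c) * theta) * A = A - (1 + c) * (theta * A) by ring.
have E2 : (1 + c) * D = D + c * D by ring.
rewrite E1 in Hred'.
have key : (1 + c) * (theta * A) <= (1 + c) * D.
  rewrite E2; move: split1 H2 HN HIs Hred'.
  set X := (1 + c) * (theta * A); set Y := c * D; set Z := Cest * N.
  set P := (1 + delta) * Is; set Q := (1 + delta) * Ss.
  move=> *; lra.
by rewrite ler_pM2l ?addr_gt0 in key.
Qed.
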